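(* The set $\{\pi\in\mathcal P:\text{all parts of }\pi\text{ are distinct}\}$ is $\Pi_2$-definable in $\mathbf Y^*=\langle\mathcal P,\le,[1]+[1]\rangle$.
   Context: $\mathcal P$ is the set of all integer partitions, including the empty partition; a partition is a nonincreasing finite sequence of positive integers (its parts). Young's lattice $\mathbf Y=\langle\mathcal P,\le\rangle$ has $(s_1,\dots,s_r)\le(n_1,\dots,n_t)$ iff $r\le t$ and $s_i\le n_i$ for all $i\le r$; $\mathbf Y^*$ is $\mathbf Y$ with a constant symbol for the partition $(1,1)$. A relation is $\Pi_n$-definable if it is defined by a first-order formula in the language $\{\le,(1,1)\}$ in prenex form with $n$ alternating quantifier blocks, the outermost universal, and a quantifier-free matrix. *)

(* Defs.v *)
From mathcomp Require Import all_boot.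
Set Implicit Arguments. Unset Strict Implicit. Unset Printing Implicit Defensive.

Definition is_partition (s : seq nat) : bool :=
  sorted geq s && all (fun n => 0 < n) s.

Record partition := Partition { parts : seq nat; partsP : is_partition parts }.

Definition yle (p q : partition) : Prop :=
  size (parts p) <= size (parts q) /\
  forall i, i < size (parts p) -> nth 0 (parts p) i <= nth 0 (parts q) i.

(* The constant (1,1) = [1]+[1]. *)
Lemma is_partition_11 : is_partition [:: 1; 1]. Proof. by []. Qed.
Definition p11 : partition := Partition is_partition_11.

Inductive term := TVar of nat | TC.

Inductive formula :=
| FLe of term & term
| FEq of term & term
| FNot of formula
| FAnd of formula & formula
| FOr of formula & formula
| FForall of nat & formula
| FExists of nat & formula.

Definition env := nat -> partition.
Definition upd (e : env) (x : nat) (p : partition) : env :=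
  fun y => if y == x then p else e y.

Definition eval_term (e : env) (t : term) : partition :=
  match t with TVar n => e n | TC => p11 end.

Fixpoint sat (e : env) (f : formula) : Prop :=
  match f with
  | FLe a b => yle (eval_term e a) (eval_term e b)
  | FEq a b => eval_term e a = eval_term e b
  | FNot g => ~ sat e g
  | FAnd g h => sat e g /\ sat e h
  | FOr g h => sat e g \/ sat e h
  | FForall x g => forall p, sat (upd e x p) g
  | FExists x g => exists p, sat (upd e x p) g
  end.

Fixpoint qfree (f : formula) : bool :=
  match f with
  | FLe _ _ | FEq _ _ => true
  | FNot g => qfree g
  | FAnd g h | FOr g h => qfree g && qfree h
  | FForall _ _ | FExists _ _ => false
  end.

(* Blocks are allowed to be empty (standard). *)
(* Unfolded:  Pi_0 = Sigma_0 = quantifier-free;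
   Pi_(n+1)    = (forall x, Pi_(n+1)) or Sigma_n;
   Sigma_(n+1) = (exists x, Sigma_(n+1)) or Pi_n. *)
Fixpoint prenex (f : formula) (n : nat) (pi : bool) {struct f} : bool :=
  match f with
  | FForall _ g =>
      if pi then (if n is 0 then false else prenex g n true)
      else (if n is n'.+2 then prenex g n'.+1 true else false)
  | FExists _ g =>
      if pi then (if n is n'.+2 then prenex g n'.+1 false else false)
      else (if n is 0 then false else prenex g n false)
  | _ => qfree f
  end.

Definition is_Pi (n : nat) (f : formula) : bool := prenex f n true.
Definition is_Sigma (n : nat) (f : formula) : bool := prenex f n false.

Definition Pi_definable (n : nat) (S : partition -> Prop) : Prop :=
  exists (f : formula) (x : nat), is_Pi n f /\
    forall (e : env) (p : partition), sat (upd e x p) f <-> S p.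

Definition distinct_parts (p : partition) : Prop := uniq (parts p).

(* Main.v *)
Require Import Defs.
From mathcomp Require Import all_boot zify.
From Stdlib Require Import Classical.

Definition pf (p : Defs.partition) (i : nat) := nth 0 (parts p) i.

Lemma pf_noninc p i : pf p i.+1 <= pf p i.
Proof.
have /andP[Hs _] := partsP p; rewrite /pf.
elim: (parts p) i Hs => [|x s IH] i //= Hs.
case: i => [|i] /=.
- by case: s Hs {IH} => [|y s] //= /andP[].
- apply: IH; exact: path_sorted Hs.
Qed.

Lemma pf_mono p i j : i <= j -> pf p j <= pf p i.
Proof.
elim: j => [|j IH]; first by rewrite leqn0 => /eqP ->.
rewrite leq_eqVlt => /orP[/eqP ->//|H].
exact: leq_trans (pf_noninc p j) (IH H).
Qed.

Lemma pf_pos p i : (0 < pf p i) = (i < size (parts p)).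
Proof.
have /andP[_ Ha] := partsP p; rewrite /pf.
case: (ltnP i (size (parts p))) => H.
- exact: (all_nthP 0 Ha).
- by rewrite nth_default.
Qed.

Lemma pf_big p i : size (parts p) <= i -> pf p i = 0.
Proof. by move=> H; rewrite /pf nth_default. Qed.

Lemma yleE p q : yle p q <-> forall i, pf p i <= pf q i.
Proof.
split.
- case=> Hs H i; case: (ltnP i (size (parts p))) => Hi; first exact: H.
  by rewrite pf_big.
- move=> H; split; last by move=> i _; exact: H.
  rewrite leqNgt; apply/negP => Hlt.
  have H1 := H (size (parts q)); have H2 := pf_pos p (size (parts q)).
  rewrite (@pf_big q _ (leqnn _)) Hlt in H1 H2. lia.
Qed.

Lemma peqE p q : p = q <-> forall i, pf p i = pf q i.
Proof.
split => [->//|H].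
have Hs : size (parts p) = size (parts q).
  apply/eqP; rewrite eqn_leq; apply/andP; split; rewrite leqNgt; apply/negP=> Hlt.
  - by have := pf_pos p (size (parts q)); rewrite Hlt H pf_big.
  - by have := pf_pos q (size (parts p)); rewrite Hlt -H pf_big.
case: p q H Hs => [s Hs] [t Ht] /= H Hst.
have E : s = t by apply: (eq_from_nth (x0:=0)) => // i _; exact: H.
subst t; congr Partition; exact: bool_irrelevance.
Qed.

Lemma mkp (g : nat -> nat) n : (forall i, g i.+1 <= g i) -> (forall i, n <= i -> g i = 0) ->
  exists p, forall i, pf p i = g i.
Proof.
elim: n g => [|n IH] g Hg Hn.
- have Hp : is_partition [::] by [].
  by exists (Partition Hp) => i; rewrite /pf nth_nil Hn.
- have [p Hp] := IH (fun i => g i.+1) (fun i => Hg i.+1) (fun i H => Hn i.+1 H).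
  case: (posnP (g 0)) => H0.
  + have Hq : is_partition [::] by [].
    exists (Partition Hq) => i; rewrite /pf nth_nil; apply/eqP; rewrite eq_sym -leqn0.
    elim: i => [|i IHi]; [by rewrite H0 | exact: leq_trans (Hg i) IHi].
  + have Hq : is_partition (g 0 :: parts p).
      have /andP[Hso Hal] := partsP p.
      rewrite /is_partition /= H0 Hal andbT.
      move: Hso (Hp 0); rewrite /pf; case: (parts p) => [|y s'] //= -> Hy.
      by rewrite Hy !andbT; exact: Hg.
    by exists (Partition Hq) => -[|i] //=; exact: Hp.
Qed.

Lemma yle_trans p q r : yle p q -> yle q r -> yle p r.
Proof. move=> /yleE H1 /yleE H2; apply/yleE => i; exact: leq_trans (H1 i) (H2 i). Qed.

Lemma yle_anti p q : yle p q -> yle q p -> p = q.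
Proof. move=> /yleE H1 /yleE H2; apply/peqE => i; apply/eqP; rewrite eqn_leq H1 H2. done. Qed.

Lemma lt_ex p q : yle p q -> p <> q -> exists i, pf p i < pf q i.
Proof.
move=> /yleE H N; apply: NNPP => X; apply: N; apply/peqE => i.
apply/eqP; rewrite eqn_leq H /= leqNgt; apply/negP => Y; apply: X; by exists i.
Qed.

Lemma nyle_ex p q : ~ yle p q -> exists i, pf q i < pf p i.
Proof.
move=> N; apply: NNPP => X; apply: N; apply/yleE => i.
rewrite leqNgt; apply/negP => Y; apply: X; by exists i.
Qed.

Definition D (p : Defs.partition) := forall i, 0 < pf p i.+1 -> pf p i.+1 < pf p i.

Lemma uniqE p : uniq (parts p) <-> D p.
Proof.
split.
- move=> Hu i Hpos; rewrite ltn_neqAle pf_noninc andbT.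
  apply/negP => /eqP E.
  have Hi : i.+1 < size (parts p) by rewrite -pf_pos.
  have := nth_uniq 0 (ltnW Hi) Hi Hu.
  by rewrite -/(pf p i) -/(pf p i.+1) E eqxx ltn_eqF.
- move=> HD; case: (boolP (uniq (parts p))) => // /(uniqPn 0) [i [j [Hij Hj E]]].
  exfalso.
  have H1 : 0 < pf p i.+1 by rewrite pf_pos; exact: leq_ltn_trans Hij Hj.
  have H2 := HD i H1. have H3 := @pf_mono p i.+1 j Hij.
  rewrite -/(pf p i) -/(pf p j) in E; lia.
Qed.

Definition V n := TVar n.
Definition Le a b := FLe (V a) (V b).
Definition Lt a b := FAnd (Le a b) (FNot (FEq (V a) (V b))).
Definition M : formula :=
  FOr (FNot (Lt 1 2)) (FOr (FNot (Lt 2 0)) (FOr (FAnd (Lt 1 5) (FAnd (Lt 5 0) (FNot (FEq (V 5) (V 2)))))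
  (FOr (FNot (Le 3 2)) (FOr (Le 3 1) (FOr (FAnd (Lt 5 3) (FNot (Le 5 1)))
  (FOr (FNot (FLe TC (V 4))) (FOr (Le 4 3) (FOr (FAnd (Lt 5 4) (FNot (Le 5 3)))
  (FAnd (Le 5 0) (FAnd (FNot (Le 5 2)) (FNot (Le 4 5)))))))))))).
Definition F := FForall 1 (FForall 2 (FForall 3 (FForall 4 (FExists 5 M)))).

Definition Spec (p : Defs.partition) := forall s t r c : Defs.partition, exists u : Defs.partition,
 ~ (yle s t /\ ~ s = t) \/ (~ (yle t p /\ ~ t = p) \/ (((yle s u /\ ~ s = u) /\ ((yle u p /\ ~ u = p) /\ ~ u = t)) \/ (~ yle r t \/ (yle r s \/ (((yle u r /\ ~ u = r) /\ ~ yle u s) \/ (~ yle p11 c \/ (yle c r \/ (((yle u c /\ ~ u = c) /\ ~ yle u r) \/ (yle u p /\ (~ yle u t /\ ~ yle c u)))))))))).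

Lemma satE e p : sat (upd e 0 p) F <-> Spec p.
Proof. split => H; exact H. Qed.

Lemma F_Pi : is_Pi 2 F. Proof. by []. Qed.

Ltac sv := repeat match goal with
 | H : is_true (_ || _) |- _ => case/orP: H => H
 | H : is_true (?x == ?y) |- _ => move/eqP: H => H; subst
 end; lia.

Lemma pf11 i : pf p11 i = (i < 2).
Proof. by case: i => [|[|i]]; rewrite /pf /= ?nth_nil. Qed.

Lemma dirB p : Spec p -> D p.
Proof.
move=> HS; apply: NNPP => HnD.
have exP : exists i, (0 < pf p i.+1) && (pf p i.+1 == pf p i).
  apply: NNPP => X; apply: HnD => i Hpos.
  have := pf_noninc p i; rewrite leq_eqVlt => /orP [/eqP E|//].
  by exfalso; apply: X; exists i; rewrite Hpos E eqxx.
have bnd : forall i, (0 < pf p i.+1) && (pf p i.+1 == pf p i) -> i <= size (parts p).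
  by move=> i /andP[H _]; rewrite pf_pos in H; lia.
case: (ex_maxnP exP bnd) => a /andP[Hpos /eqP Heq] Hmax.
have [k Hk] : exists k, pf p a = k.+1 by exists (pf p a).-1; lia.
have Hlt2 : pf p a.+2 < pf p a.+1.
  have := pf_noninc p a.+1; rewrite leq_eqVlt => /orP [/eqP E|//].
  have := Hmax a.+1; rewrite E eqxx andbT Hpos => /(_ isT); lia.
have Hmono i : i <= a -> k.+1 <= pf p i by move=> Hi; rewrite -Hk; exact: pf_mono.
have Hnon := pf_noninc p.
have Hbig := @pf_big p.
have [s Es] : exists s, forall i, pf s i = if (i == a) || (i == a.+1) then k else pf p i.
  apply: (@mkp _ (size (parts p))).
  - move=> i; have := Hnon i; have := Hmono i.
    do 2 case: ifP; move=> *; sv.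
  - move=> i Hi; have := Hbig i; case: ifP; move=> *; sv.
have [t Et] : exists t, forall i, pf t i = if i == a.+1 then k else pf p i.
  apply: (@mkp _ (size (parts p))).
  - move=> i; have := Hnon i; have := Hmono i.
    do 2 case: ifP; move=> *; sv.
  - move=> i Hi; have := Hbig i; case: ifP; move=> *; sv.
have [r Er] : exists r, forall i, pf r i = if i <= a then k.+1 else 0.
  apply: (@mkp _ (a.+1)).
  - move=> i; do 2 case: ifP; move=> *; sv.
  - move=> i Hi; case: ifP; move=> *; sv.
have [c Ec] : exists c, forall i, pf c i = if i <= a.+1 then 1 else 0.
  apply: (@mkp _ (a.+2)).
  - move=> i; do 2 case: ifP; move=> *; sv.
  - move=> i Hi; case: ifP; move=> *; sv.
have [u Hu] := HS s t r c.
have Hsa := Es a; have Hsb := Es a.+1; have Hta := Et a; have Htb := Et a.+1.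
rewrite eqxx /= in Hsa; rewrite eqxx orbT in Hsb; rewrite eqxx in Htb.
rewrite (_ : (a == a.+1) = false) in Hta; last by lia.
have Hst : yle s t.
  apply/yleE => i; rewrite Es Et; do 2 case: ifP; move=> *; sv.
have Htp : yle t p.
  apply/yleE => i; rewrite Et; case: ifP; move=> *; sv.
have Hrt : yle r t.
  apply/yleE => i; have := Hmono i; rewrite Er Et; do 2 case: ifP; move=> *; sv.
case: Hu => [H|[H|[H|[H|[H|[H|[H|[H|[H|H]]]]]]]]].
- apply: H; split=> // /peqE/(_ a); lia.
- apply: H; split=> // /peqE/(_ a.+1); lia.
- move: H => [[/yleE Hsu Nsu] [[/yleE Hup Nup] Nut]].
  have H1 := Hsu a; have H2 := Hup a; have H3 := Hsu a.+1; have H4 := Hup a.+1.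
  have H5 := pf_noninc u a.
  case: (eqVneq (pf u a) k) => Eua.
  + apply: Nsu; apply/peqE => i; have := Hsu i; have := Hup i; rewrite Es; case: ifP; move=> *; sv.
  + case: (eqVneq (pf u a.+1) k) => Eub.
    * apply: Nut; apply/peqE => i; have := Hsu i; have := Hup i; rewrite Et Es; do 2 case: ifP; move=> *; sv.
    * apply: Nup; apply/peqE => i; have := Hsu i; have := Hup i; rewrite Es; case: ifP; move=> *; sv.
- exact: H.
- move/yleE: H => /(_ a); rewrite Er Hsa leqnn; lia.
- move: H => [[/yleE Hur Nur] Nus].
  have [j Hj] := @nyle_ex _ _ Nus.
  have Hja : j = a.
    have := Hur j; have := Hmono j; move: (Hj); rewrite Es Er; do 2 case: ifP; move=> *; sv.
  subst j. rewrite Hsa in Hj.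
  apply: Nur; apply/peqE => i; have := Hur i; rewrite Er; case: ifP => Hi; last lia.
  have := @pf_mono u i a Hi; lia.
- apply: H; apply/yleE => i; rewrite pf11 Ec; case: ifP; move=> *; sv.
- move/yleE: H => /(_ a.+1); rewrite Er Ec leqnn ltnn; lia.
- move: H => [[/yleE Huc Nuc] Nur].
  have [j Hj] := @nyle_ex _ _ Nur.
  have Hja : j = a.+1.
    have := Huc j; move: (Hj); rewrite Er Ec; do 2 case: ifP; move=> *; sv.
  subst j. rewrite Er (_ : (a.+1 <= a) = false) in Hj; last by lia.
  apply: Nuc; apply/peqE => i; have := Huc i; rewrite Ec; case: ifP => Hi; last lia.
  have := @pf_mono u i a.+1 Hi; have := Huc a.+1; rewrite Ec leqnn; lia.
- move: H => [/yleE Hup [Nut Ncu]].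
  have [j Hj] := @nyle_ex _ _ Nut.
  have Hja : j = a.+1.
    have := Hup j; move: (Hj); rewrite Et; case: ifP; move=> *; sv.
  subst j. rewrite Htb in Hj.
  apply: Ncu; apply/yleE => i; rewrite Ec; case: ifP => Hi; last lia.
  have := @pf_mono u i a.+1 Hi; lia.
Qed.
Lemma add_cell s t a : yle s t -> pf s a < pf t a ->
  (forall m, pf s m < pf t m -> a <= m) ->
  exists u, forall i, pf u i = if i == a then (pf s a).+1 else pf s i.
Proof.
move=> /yleE Hst Ha Hmin.
apply: (@mkp _ (size (parts s) + a).+1).
- move=> i; have := pf_noninc s i; have := pf_noninc t i; have := Hst i.
  have : i < a -> pf t i <= pf s i.
    by move=> Hi; rewrite leqNgt; apply/negP => /Hmin; lia.
  case: (eqVneq i.+1 a) => [E|N]; last first.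
    case: ifP; move=> *; sv.
  subst a; rewrite (_ : (i == i.+1) = false); last by lia.
  move=> *; lia.
- move=> i Hi; case: ifP => H; first lia.
  apply: pf_big; lia.
Qed.

Lemma dirA p : D p -> Spec p.
Proof.
move=> HD s t r c; apply: NNPP => Hno.
have [Hst Hnst] : yle s t /\ s <> t by apply: NNPP => X; apply: Hno; exists s; left.
have [Htp Hntp] : yle t p /\ t <> p by apply: NNPP => X; apply: Hno; exists s; right; left.
have chain u : yle s u -> s <> u -> yle u p -> u <> p -> u = t.
  move=> H1 H2 H3 H4; apply: NNPP => X; apply: Hno; exists u; right; right; left; tauto.
have Hrt : yle r t by apply: NNPP => X; apply: Hno; exists s; do 3 right; left.
have Hrs : ~ yle r s by move=> X; apply: Hno; exists s; do 4 right; left.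
have rmin u : yle u r -> ~ yle u s -> u = r.
  move=> H1 H2; apply: NNPP => X; apply: Hno; exists u; do 5 right; left; tauto.
have Hc11 : yle p11 c by apply: NNPP => X; apply: Hno; exists s; do 6 right; left.
have Hcr : ~ yle c r by move=> X; apply: Hno; exists s; do 7 right; left.
have cmin u : yle u c -> ~ yle u r -> u = c.
  move=> H1 H2; apply: NNPP => X; apply: Hno; exists u; do 8 right; left; tauto.
have fin u : yle u p -> ~ yle u t -> yle c u.
  move=> H1 H2; apply: NNPP => X; apply: Hno; exists u; do 9 right; tauto.
clear Hno.
move/yleE: (Hst) => Hst'; move/yleE: (Htp) => Htp'.
have [a0 Ha0] := @lt_ex _ _ Hst Hnst.
have exa : exists a, pf s a < pf t a by exists a0.
case: (ex_minnP exa) => a Ha Hamin.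
have [u Hu] := @add_cell _ _ _ Hst Ha Hamin.
have Eta : forall i, pf t i = if i == a then (pf s a).+1 else pf s i.
  have ut : u = t.
    apply: chain.
    - apply/yleE => i; rewrite Hu; case: ifP => // /eqP ->; lia.
    - move/peqE/(_ a); rewrite Hu eqxx; lia.
    - apply: yle_trans Htp; apply/yleE => i; rewrite Hu; case: ifP => [/eqP ->//|_]; exact: Hst'.
    - move=> E; subst u; apply: Hntp; apply: yle_anti Htp _.
      apply/yleE => i; rewrite Hu; case: ifP => [/eqP ->//|_]; exact: Hst'.
  by move=> i; rewrite -ut Hu.
have Eta_a : pf t a = (pf s a).+1 by rewrite Eta eqxx.
have [b0 Hb0] := @lt_ex _ _ Htp Hntp.
have exb : exists b, pf t b < pf p b by exists b0.
case: (ex_minnP exb) => b Hb Hbmin.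
have [u' Hu'] := @add_cell _ _ _ Htp Hb Hbmin.
have Epb : forall i, pf p i = if i == b then (pf t b).+1 else pf t i.
  have up : u' = p.
    apply: NNPP => N.
    have : u' = t.
      apply: chain => //.
      - apply: yle_trans Hst _; apply/yleE => i; rewrite Hu'; case: ifP => [/eqP ->|_] //; lia.
      - move/peqE/(_ a); rewrite Hu'; case: ifP => [/eqP <-|_]; lia.
      - apply/yleE => i; rewrite Hu'; case: ifP => [/eqP ->//|_]; exact: Htp'.
    move/peqE/(_ b); rewrite Hu' eqxx; lia.
  by move=> i; rewrite -up Hu'.
have Hcase : b = a \/ (b = a.+1 /\ pf s a.+1 = pf s a).
  apply: NNPP => X.
  have Hba : b != a by apply/eqP => E; apply: X; left.
  have Etb : pf t b = pf s b by rewrite Eta (negbTE Hba).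
  have [v Hv] : exists v, forall i, pf v i = if i == b then (pf s b).+1 else pf s i.
    apply: (@mkp _ (size (parts s) + b).+1).
    - move=> i; have := pf_noninc s i; case: (eqVneq i.+1 b) => [E|N].
      + subst b. rewrite (_ : (i == i.+1) = false); last lia.
        have := pf_noninc p i; rewrite !Epb eqxx (_ : (i == i.+1) = false); last lia.
        rewrite Etb Eta; case: (eqVneq i a) => [Eia|Nia].
        * subst i. move=> *. have : pf s a.+1 <> pf s a by move=> E; apply: X; right. lia.
        * move=> *; lia.
      + case: ifP; move=> *; sv.
    - move=> i Hi; case: ifP => H; first lia. apply: pf_big; lia.
  have Hab : (a == b) = false by rewrite eq_sym (negbTE Hba).
  have : v = t.
    apply: chain.
    - apply/yleE => i; rewrite Hv; case: ifP => [/eqP ->|_] //; lia.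
    - move/peqE/(_ b); rewrite Hv eqxx; lia.
    - apply/yleE => i; rewrite Hv Epb; case: ifP => _; [rewrite Etb // | exact: Hst'].
    - move/peqE/(_ a); rewrite Hv Epb Hab Eta_a; lia.
  move/peqE/(_ b); rewrite Hv eqxx Etb; lia.
case: Hcase => [Eb|[Eb Hsa1]]; subst b; last first.
  have Hpa : pf p a = (pf s a).+1.
    by rewrite Epb (_ : (a == a.+1) = false) ?Eta_a //; lia.
  have Hpa1 : pf p a.+1 = (pf s a).+1.
    by rewrite Epb eqxx Eta (_ : (a.+1 == a) = false) ?Hsa1 //; lia.
  have := HD a; rewrite Hpa Hpa1; lia.
set k := pf s a in Eta_a Hu Hu' Epb Eta Ha Hb.
have Hpa : pf p a = k.+2 by rewrite Epb eqxx Eta_a.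
have Ht_ne i : i != a -> pf t i = pf s i by move=> N; rewrite Eta (negbTE N).
have [j Hj] := @nyle_ex _ _ Hrs.
have Hja : j = a.
  apply/eqP; apply: contraT => N. have := Ht_ne j N; have := (yleE r t).1 Hrt j; lia.
subst j.
have Hra : pf r a = k.+1 by have := (yleE _ _).1 Hrt a; rewrite Eta_a; lia.
have Hr0 : pf r 0 <= k.+1.
  have [v Hv] : exists v, forall i, pf v i = minn (pf r i) k.+1.
    apply: (@mkp _ (size (parts r))).
    - move=> i; have := pf_noninc r i; lia.
    - move=> i Hi; rewrite pf_big //; lia.
  have E : v = r.
    apply: rmin.
    - apply/yleE => i; rewrite Hv; lia.
    - move/yleE/(_ a); rewrite Hv Hra; lia.
  have := Hv 0; rewrite E; lia.
have Hca : 0 < pf c a.+1.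
  rewrite lt0n; apply/negP => /eqP Hc0.
  have [j Hj2] := @nyle_ex _ _ Hcr.
  case: (ltnP a j) => Haj.
  - have := @pf_mono c a.+1 j Haj; lia.
  - have := @pf_mono r j a Haj; have := @pf_mono c 0 j (leq0n j). move=> *.
    have [v Hv] : exists v, forall i, pf v i = if i == 0 then pf c 0 else 0.
      apply: (@mkp _ 1).
      - move=> i /=; case: ifP; move=> *; sv.
      - move=> i Hi; case: ifP; move=> *; sv.
    have E : v = c.
      apply: cmin.
      + apply/yleE => i; rewrite Hv; case: ifP => // /eqP ->. done.
      + move/yleE/(_ 0); rewrite Hv /=; lia.
    have := Hv 1; rewrite E /=; have := (yleE _ _).1 Hc11 1; rewrite pf11; lia.
have [w Hw] : exists w, forall i, pf w i = if i <= a then k.+2 else 0.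
  apply: (@mkp _ a.+1).
  - move=> i; case: ifP; case: ifP; move=> *; sv.
  - move=> i Hi; case: ifP; move=> *; sv.
have H1 : yle w p.
  apply/yleE => i; rewrite Hw; case: ifP => Hi //. have := @pf_mono p i a Hi; lia.
have H2 : ~ yle w t.
  move/yleE/(_ a); rewrite Hw leqnn Eta_a; lia.
have := (yleE _ _).1 (fin w H1 H2) a.+1; rewrite Hw ltnn; lia.
Qed.

Theorem proposition3p5 : Pi_definable 2 distinct_parts.
Proof.
exists F, 0; split; first exact: F_Pi.
move=> e p; rewrite satE /distinct_parts uniqE.
split; [exact: dirB | exact: dirA].
Qed.
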